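(* Let $D$ be an integral domain with field of fractions $K$ and let $A$ be a $D$-algebra with standard assumptions. Assume that $A$ is an integral $D$-algebra of bounded degree. Then $\textnormal{Int}_K(A)\neq D[X]$ if and only if $\textnormal{Int}(D)\neq D[X]$. In particular, if $A$ is finitely generated as a $D$-module, then $\textnormal{Int}_K(A)\neq D[X]$ if and only if $\textnormal{Int}(D)\neq D[X]$.
   Context: A $D$-algebra $A$ (not necessarily commutative) satisfies the standard assumptions if it is torsion-free as a $D$-module and $A\cap K = D$, where $A$ and $K$ are identified with their images in $B=K\otimes_D A$. Polynomials in $K[X]$ are evaluated at elements of $A$ inside $B$. $\textnormal{Int}_K(A)=\{f\in K[X]\mid f(A)\subseteq A\}$ and $\textnormal{Int}(D)=\{f\in K[X]\mid f(D)\subseteq D\}$. $A$ is an integral algebra of bounded degree if there is $n$ such that every element of $A$ satisfies a monic polynomial in $D[X]$ of degree at most $n$. *)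

(* Defs.v *)
From HB Require Import structures.
From mathcomp Require Import all_boot all_order all_algebra.
Set Implicit Arguments. Unset Strict Implicit. Unset Printing Implicit Defensive.
Import Order.TTheory GRing.Theory Num.Theory.
Local Open Scope ring_scope.

(* K is identified with its image k |-> k%:A in B. *)

Definition is_frac_field (K : fieldType) (D : {pred K}) : Prop :=
  subring_closed D /\
  forall x : K, exists a b, [/\ a \in D, b \in D, b != 0 & x = a / b].

Definition is_D_algebra (K : fieldType) (D : {pred K}) (B : algType K)
  (A : {pred B}) : Prop :=
  subring_closed A /\ (forall d a, d \in D -> a \in A -> d *: a \in A).

(* Standard assumptions, with B playing the role of K (x)_D A:
   the natural map K (x)_D A -> B is an isomorphism (every element of B is
   d^-1 a, d in D \ 0, a in A; injectivity is automatic since A is a subset of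
   B, which also gives torsion-freeness), and A \cap K = D. *)
Definition standard_assumptions (K : fieldType) (D : {pred K}) (B : algType K)
  (A : {pred B}) : Prop :=
  (forall b : B, exists d a, [/\ d \in D, d != 0, a \in A & b = d^-1 *: a]) /\
  (forall k : K, (k%:A \in A) <-> (k \in D)).

Definition evalB (K : fieldType) (B : algType K) (f : {poly K}) (b : B) : B :=
  (map_poly (in_alg B) f).[b].

Definition IntK (K : fieldType) (B : algType K) (A : {pred B}) (f : {poly K}) : Prop :=
  forall a, a \in A -> evalB f a \in A.

Definition IntD (K : fieldType) (D : {pred K}) (f : {poly K}) : Prop :=
  forall d, d \in D -> f.[d] \in D.

Definition DX (K : fieldType) (D : {pred K}) (f : {poly K}) : Prop :=
  f \is a polyOver D.

Definition integral_bounded_degree (K : fieldType) (D : {pred K}) (B : algType K)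
  (A : {pred B}) : Prop :=
  exists n : nat, forall a, a \in A ->
    exists p : {poly K}, [/\ p \is monic, p \is a polyOver D,
                            (size p <= n.+1)%N & evalB p a = 0].

Definition fin_gen_D_module (K : fieldType) (D : {pred K}) (B : algType K)
  (A : {pred B}) : Prop :=
  exists s : seq B, all (fun x => x \in A) s /\
    forall a, a \in A -> exists c : 'I_(size s) -> K,
      (forall i, c i \in D) /\ a = \sum_(i < size s) c i *: s`_i.

(* Main.v *)
Require Import Defs.
From HB Require Import structures.
From mathcomp Require Import all_boot all_order all_algebra ring zify.
From Stdlib Require Import Classical.
Import GRing.Theory.
Local Open Scope ring_scope.

Section Main.
Variables (K : fieldType) (D : {pred K}) (B : algType K) (A : {pred B}).
Hypothesis hD : subring_closed D.
Hypothesis hA : subring_closed A.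
Hypothesis hZ : forall d a, d \in D -> a \in A -> d *: a \in A.
Hypothesis hKA : forall k, (k%:A \in A) <-> (k \in D).

HB.instance Definition _ := GRing.isSubringClosed.Build K D hD.
HB.instance Definition _ := GRing.isSubringClosed.Build B A hA.

Lemma intD_witness f : IntD D f -> ~ DX D f ->
  exists u (j k : nat), u \notin D /\ (j < k)%N /\
     forall t, t \in D -> u * (t ^+ k - t ^+ j) \in D.
Proof.
have [S] := ubnP (size f); elim: S f => // S IH f szf If nDf.
have fn0 : f != 0 by apply: contra_notN nDf => /eqP ->; rewrite /DX rpred0.
set k := (size f).-1.
have szk : size f = k.+1 by rewrite /k prednK // size_poly_gt0.
pose g t := \poly_(i < k) (f`_i * (t ^+ i - t ^+ k)).
have hexp x : f.[x] = \sum_(i < k) f`_i * x ^+ i + f`_k * x ^+ k.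
  by rewrite horner_coef szk big_ord_recr.
have gev t d : (g t).[d] = f.[t * d] - t ^+ k * f.[d].
  rewrite horner_poly !hexp.
  have -> : \sum_(i < k) f`_i * (t ^+ i - t ^+ k) * d ^+ i =
     \sum_(i < k) f`_i * (t * d) ^+ i - t ^+ k * \sum_(i < k) f`_i * d ^+ i.
    by rewrite mulr_sumr -sumrB; apply: eq_bigr => i _; rewrite exprMn; ring.
  by rewrite exprMn; ring.
case: (classic (exists t, t \in D /\ ~ DX D (g t))) => [[t [tD ng]]|].
  apply: (IH (g t)) => //.
    apply: leq_ltn_trans (size_poly _ _) _; by rewrite -ltnS -szk.
  by move=> d dD; rewrite gev rpredB ?rpredM ?rpredX ?(If d) ?(If (t * d)) ?rpredM.
move=> /not_ex_all_not allg.
have gD t i : t \in D -> (i < k)%N -> f`_i * (t ^+ i - t ^+ k) \in D.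
  move=> tD ik; have := allg t; move=> /not_and_or [/(_ tD)[]|/NNPP/polyOverP/(_ i)].
  by rewrite coef_poly ik.
have [[i fi]|] := pickP (fun i : 'I_k => f`_i \notin D).
  exists f`_i, i, k; split=> //; split=> // t tD.
  by rewrite -opprB mulrN rpredN gD.
move=> allD; exfalso; apply: nDf; apply/polyOverP => i.
have fiD (l : 'I_k) : f`_l \in D by have := allD l; rewrite /= => /negbFE.
case: (ltngtP i k) => [ik|ki|->].
- exact: (fiD (Ordinal ik)).
- by rewrite nth_default ?rpred0 // szk.
have := If 1 (rpred1 _); rewrite hexp expr1n mulr1 => h.
rewrite -[f`_k](addKr (\sum_(i < k) f`_i * 1 ^+ i)) rpredD ?rpredN //.
by rewrite rpred_sum // => l _; rewrite expr1n mulr1.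
Qed.

Lemma evalBE (f : {poly K}) a : evalB f a = @horner_alg K B a f.
Proof. by []. Qed.

Lemma ev_polyOver (f : {poly K}) a : f \is a polyOver D -> a \in A -> @horner_alg K B a f \in A.
Proof.
move=> /polyOverP fD aA; rewrite -evalBE /evalB horner_coef rpred_sum // => i _.
by rewrite coef_map /= mulr_algl hZ // rpredX.
Qed.

Lemma IntK_IntD f : IntK A f -> IntD D f.
Proof.
move=> H d dD; apply/hKA; have := H _ (proj2 (hKA d) dD).
by rewrite /evalB -[d%:A]/(in_alg B d) horner_map.
Qed.

Lemma DX_IntD f : DX D f -> IntD D f.
Proof. by move=> fD d dD; rewrite rpred_horner. Qed.

Lemma DX_IntK f : DX D f -> IntK A f.
Proof. by move=> fD a aA; rewrite evalBE ev_polyOver. Qed.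

Lemma det_polyOver m (Q : 'M[{poly K}]_m) :
  (forall i j, Q i j \is a polyOver D) -> \det Q \is a polyOver D.
Proof.
move=> HQ; rewrite /determinant rpred_sum // => s _.
by rewrite rpredM ?rpredX ?rpredN ?rpred1 // rpred_prod.
Qed.

Lemma adj_polyOver m (Q : 'M[{poly K}]_m) :
  (forall i j, Q i j \is a polyOver D) -> forall i j, \adj Q i j \is a polyOver D.
Proof.
move=> HQ i j; rewrite mxE /cofactor rpredM ?rpredX ?rpredN ?rpred1 //.
by apply: det_polyOver => k l; rewrite !mxE.
Qed.

Lemma act_lemma a m (Q : 'M[{poly K}]_m) (v w : 'I_m -> B) :
  (forall i, \sum_j @horner_alg K B a (Q i j) * v j = w i) ->
  forall i, @horner_alg K B a (\det Q) * v i = \sum_j @horner_alg K B a (\adj Q i j) * w j.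
Proof.
move=> Hw i.
transitivity (\sum_l @horner_alg K B a (((\adj Q) *m Q) i l) * v l); last first.
  have -> : \sum_j @horner_alg K B a (\adj Q i j) * w j =
     \sum_j \sum_l @horner_alg K B a (\adj Q i j) * (@horner_alg K B a (Q j l) * v l).
    by apply: eq_bigr => j _; rewrite -(Hw j) mulr_sumr.
  rewrite exchange_big /=; apply: eq_bigr => l _.
  rewrite mxE rmorph_sum /= mulr_suml; apply: eq_bigr => j _.
  by rewrite rmorphM mulrA.
rewrite mul_adj_mx (bigD1 i) //= big1 ?addr0; first by rewrite mxE eqxx mulr1n.
by move=> l /negbTE nli; rewrite mxE eq_sym nli mulr0n rmorph0 mul0r.
Qed.


Section Constr.
Variables (u : K) (j k' n : nat).
Hypothesis hj : (j < k'.+1)%N.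
Hypothesis hu : forall t, t \in D -> u * (t ^+ k'.+1 - t ^+ j) \in D.

Definition Idx := ({ffun 'I_n.+1 -> 'I_k'.+1} * 'I_n.+1)%type.
Definition incr (o : 'I_k'.+1) : 'I_k'.+1 :=
  if (o.+1 < k'.+1)%N then inord o.+1 else inord j.
Definition red (al : {ffun 'I_n.+1 -> 'I_k'.+1}) (s : 'I_n.+1) :
  {ffun 'I_n.+1 -> 'I_k'.+1} := [ffun l => if l == s then incr (al s) else al l].
Definition Phi (x y : Idx) : K :=
  if (x.2.+1 < n.+1)%N then ((y.1 == x.1) && (y.2 == x.2.+1 :> nat))%:R
  else - (y.1 == red x.1 y.2)%:R.
Definition Msz := #|{: Idx}|.
Definition PhiM : 'M[K]_Msz := \matrix_(i, i') Phi (enum_val i) (enum_val i').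
Definition chi := char_poly PhiM.

Lemma Phi_D x y : Phi x y \in D.
Proof. by rewrite /Phi; case: ifP => _; rewrite ?rpredN rpredMn ?rpred1. Qed.

Lemma cpm_polyOver i i' : char_poly_mx PhiM i i' \is a polyOver D.
Proof.
rewrite /char_poly_mx !mxE rpredB ?rpredMn ?polyOverX //.
by rewrite polyOverC Phi_D.
Qed.

Lemma sum_enum (V : zmodType) (F : Idx -> V) :
  \sum_(i < Msz) F (enum_val i) = \sum_x F x.
Proof.
have := (big_enum_val_cond (A := {: Idx}) predT F); rewrite /= => <-.
by apply: eq_bigl.
Qed.

Variables (a : B) (c : nat -> K).
Hypothesis aA : a \in A.
Hypothesis cD : forall l, c l \in D.
Hypothesis ha : a ^+ n.+1 = - \sum_(l < n.+1) c l *: a ^+ l.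

Definition cp (al : {ffun 'I_n.+1 -> 'I_k'.+1}) := \prod_(l < n.+1) c l ^+ al l.
Definition vv (x : Idx) := (u * cp x.1) *: a ^+ x.2.
Definition ww (x : Idx) := a * vv x - \sum_y Phi x y *: vv y.

Lemma cp_D al : cp al \in D.
Proof. by rewrite rpred_prod // => l _; rewrite rpredX. Qed.

Lemma coef_red_D al s : u * cp (red al s) - u * cp al * c s \in D.
Proof.
rewrite /cp (bigD1 s) //= [X in _ - _ * X * _](bigD1 s) //=.
set P := \prod_(i < n.+1 | i != s) c i ^+ al i.
have -> : \prod_(l < n.+1 | l != s) c l ^+ red al s l = P.
  by apply: eq_bigr => l /negbTE ls; rewrite ffunE ls.
rewrite ffunE eqxx /incr.
have PD : P \in D by rewrite rpred_prod // => l _; rewrite rpredX.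
case: ifP => hs.
  rewrite inordK // exprS.
  have -> : u * (c s * c s ^+ al s * P) - u * (c s ^+ al s * P) * c s = 0 by ring.
  exact: rpred0.
have als : nat_of_ord (al s) = k'.
  by move/negbT: hs; have := ltn_ord (al s); lia.
rewrite inordK // als.
have -> : u * (c s ^+ j * P) - u * (c s ^+ k' * P) * c s =
          - (P * (u * (c s ^+ k'.+1 - c s ^+ j))) by rewrite exprSr; ring.
by rewrite rpredN rpredM // hu.
Qed.

Lemma ww_A x : ww x \in A.
Proof.
case: x => al r; rewrite /ww /Phi /=.
case hr : (r.+1 < n.+1)%N.
  pose y0 : Idx := (al, Ordinal hr).
  rewrite (bigD1 y0) //= big1 ?addr0; last first.
    move=> [be s] /= ny; case: eqP => [ebe|] /=; last by rewrite scale0r.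
    case: eqP => [es|]; last by rewrite scale0r.
    by exfalso; move: ny; rewrite /y0 ebe; apply/negP/negPn/eqP; congr pair; apply: val_inj.
  rewrite !eqxx /= scale1r /vv /= -scalerCA -scalerAl -exprS subrr; exact: rpred0.
have rn : nat_of_ord r = n by move/negbT: hr; have := ltn_ord r; lia.
rewrite -(pair_bigA _ (fun be s => - (be == red al s)%:R *: vv (be, s))) /=.
rewrite exchange_big /=.
have -> : \sum_s \sum_be - (be == red al s)%:R *: vv (be, s) =
          - \sum_(s < n.+1) (u * cp (red al s)) *: a ^+ s.
  rewrite -sumrN; apply: eq_bigr => s _.
  rewrite (bigD1 (red al s)) //= big1 ?addr0; first by rewrite eqxx scaleN1r.
  by move=> be /negbTE ->; rewrite scaleNr scale0r oppr0.
rewrite opprK /vv /= -scalerCA -scalerAl -exprS rn ha scalerN scaler_sumr -sumrN -big_split /=.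
rewrite rpred_sum // => s _.
rewrite scalerA addrC -scalerBl.
by apply: hZ; rewrite ?rpredX // coef_red_D.
Qed.

Lemma key : u *: @horner_alg K B a chi \in A.
Proof.
pose v (i : 'I_Msz) := vv (enum_val i); pose w (i : 'I_Msz) := ww (enum_val i).
have Hw : forall i, \sum_i' @horner_alg K B a (char_poly_mx PhiM i i') * v i' = w i.
  move=> i; rewrite /w /ww -(@sum_enum _ (fun y => Phi (enum_val i) y *: vv y)).
  rewrite (eq_bigr (fun i' => a *+ (i == i') * v i' - Phi (enum_val i) (enum_val i') *: v i')); last first.
    move=> i' _; rewrite /char_poly_mx !mxE rmorphB rmorphMn /= horner_algX horner_algC.
    by rewrite mulrBl mulr_algl.
  rewrite sumrB (bigD1 i) //= big1 ?addr0 ?eqxx ?mulr1n //.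
  by move=> i' /negbTE; rewrite eq_sym => ->; rewrite mulr0n mul0r.
pose x0 : Idx := ([ffun=> ord0], ord0).
have := @act_lemma a _ _ _ _ Hw (enum_rank x0).
rewrite /v enum_rankK /vv /= /cp big1 ?mulr1 ?expr0; last by move=> l _; rewrite ffunE expr0.
rewrite -scalerAr mulr1 => ->.
rewrite rpred_sum // => i _; rewrite rpredM //; last exact: ww_A.
by apply: ev_polyOver => //; apply: adj_polyOver; exact: cpm_polyOver.
Qed.
End Constr.

Lemma monic_eval_rel (q : {poly K}) a N :
  q \is monic -> size q = N.+2 -> @horner_alg K B a q = 0 ->
  a ^+ N.+1 = - \sum_(l < N.+1) q`_l *: a ^+ l.
Proof.
move=> mq szq; rewrite -evalBE /evalB horner_coef size_map_poly szq big_ord_recr /=.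
rewrite coef_map /= mulr_algl.
have -> : q`_N.+1 = 1 by move/monicP: mq; rewrite /lead_coef szq.
rewrite scale1r => /eqP; rewrite addrC addr_eq0 => /eqP ->; congr (- _).
by apply: eq_bigr => l _; rewrite coef_map /= mulr_algl.
Qed.

Lemma hard : integral_bounded_degree D A ->
  ~ (forall f, IntD D f <-> DX D f) -> ~ (forall f, IntK A f <-> DX D f).
Proof.
move=> [n Hn] nI HK.
have [f [If nf]] : exists f, IntD D f /\ ~ DX D f.
  apply: NNPP => H; apply: nI => f; split=> [If|]; last exact: DX_IntD.
  by apply: NNPP => nf; apply: H; exists f.
have [u [j [k [nu [jk hu]]]]] := @intD_witness f If nf.
case: k jk hu => [//|k'] jk hu.
pose F := u *: chi j k' n.
have IF : IntK A F.
  move=> a aA; have [p [mp pD szp pa]] := Hn a aA.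
  pose q := p * 'X^(n.+2 - size p).
  have mq : q \is monic by rewrite monicMr // monicXn.
  have szq : size q = n.+2.
    rewrite size_monicM ?monic_neq0 ?monicXn // size_polyXn.
    have : (0 < size p)%N by rewrite size_poly_gt0 monic_neq0.
    move: szp; lia.
  have qD : forall l, q`_l \in D.
    by apply/polyOverP; rewrite rpredM ?polyOverXn.
  have qa : @horner_alg K B a q = 0 by rewrite rmorphM /= -evalBE pa mul0r.
  have ha := @monic_eval_rel q a n mq szq qa.
  rewrite evalBE /F linearZ /=.
  rewrite mulr_algl; exact: (@key u j k' n jk hu a (fun l => q`_l) aA qD ha).
have := (proj1 (HK F) IF) => /polyOverP/(_ (Msz k' n)).
rewrite coefZ.
have -> : (chi j k' n)`_(Msz k' n) = 1.
  have := char_poly_monic (PhiM j k' n); move/monicP; rewrite /lead_coef size_char_poly.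
  by [].
by rewrite mulr1 (negbTE nu).
Qed.

Lemma fg_bounded : fin_gen_D_module D A -> integral_bounded_degree D A.
Proof.
move=> [s [sA Hs]]; exists (size s) => a aA.
have sAi (i : 'I_(size s)) : s`_i \in A by apply: (allP sA); rewrite mem_nth.
have : forall i : 'I_(size s), exists r : 'rV[K]_(size s),
    (forall l, r 0 l \in D) /\ a * s`_i = \sum_l r 0 l *: s`_l.
  move=> i; have [cc [cD ->]] := Hs _ (rpredM aA (sAi i)).
  by exists (\row_l cc l); split => [l|]; rewrite ?mxE //; apply: eq_bigr => l _; rewrite mxE.
move=> /fin_all_exists [r Hr].
pose C : 'M[K]_(size s) := \matrix_(i, l) r i 0 l.
have Hw : forall i, \sum_l @horner_alg K B a (char_poly_mx C i l) * s`_l = 0.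
  move=> i; rewrite (eq_bigr (fun l => a *+ (i == l) * s`_l - r i 0 l *: s`_l)); last first.
    move=> l _; rewrite /char_poly_mx !mxE rmorphB rmorphMn /= horner_algX horner_algC.
    by rewrite mulrBl mulr_algl.
  rewrite sumrB (bigD1 i) //= big1 ?addr0 ?eqxx ?mulr1n; first by rewrite (proj2 (Hr i)) subrr.
  by move=> l /negbTE; rewrite eq_sym => ->; rewrite mulr0n mul0r.
have H0 (i : 'I_(size s)) : @horner_alg K B a (char_poly C) * s`_i = 0.
  rewrite (@act_lemma a _ _ (fun l => s`_l) (fun _ => 0) Hw i).
  by rewrite big1 // => l _; rewrite mulr0.
have cpD : char_poly C \is a polyOver D.
  apply: det_polyOver => i l; rewrite /char_poly_mx !mxE rpredB ?rpredMn ?polyOverX //.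
  by rewrite polyOverC (proj1 (Hr i)).
exists (char_poly C); split => //; first exact: char_poly_monic.
  by rewrite size_char_poly.
have [e [eD e1]] := Hs 1 (rpred1 _).
rewrite evalBE -[@horner_alg K B a _]mulr1 e1 mulr_sumr big1 // => i _.
by rewrite -scalerAr H0 scaler0.
Qed.

End Main.


Theorem mainTheorem3 (K : fieldType) (D : {pred K}) (B : algType K) (A : {pred B}) :
  is_frac_field D -> is_D_algebra D A -> standard_assumptions D A ->
  (integral_bounded_degree D A ->
     (~ (forall f : {poly K}, IntK A f <-> DX D f)) <->
     (~ (forall f : {poly K}, IntD D f <-> DX D f))) /\
  (fin_gen_D_module D A ->
     (~ (forall f : {poly K}, IntK A f <-> DX D f)) <->
     (~ (forall f : {poly K}, IntD D f <-> DX D f))).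
Proof.
move=> [hD _] [hA hZ] [_ hKA].
have easy : ~ (forall f : {poly K}, IntK A f <-> DX D f) ->
            ~ (forall f : {poly K}, IntD D f <-> DX D f).
  move=> nK HD; apply: nK => f; split => [HK|Hf].
    by apply/(HD f); exact: (@IntK_IntD K D B A hKA f HK).
  exact: (@DX_IntK K D B A hD hA hZ f Hf).
have bd : integral_bounded_degree D A ->
     (~ (forall f : {poly K}, IntK A f <-> DX D f)) <->
     (~ (forall f : {poly K}, IntD D f <-> DX D f)).
  by move=> hb; split; [exact: easy | exact: (@hard K D B A hD hA hZ hb)].
split => // /(@fg_bounded K D B A hD hA); exact: bd.
Qed.
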